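(* Let $\dot x$ be a hereditarily symmetric name supported by a countable $\rho$-closed set $A\subseteq\omega_1$, let $m<\omega$, and suppose $p\in\mathbb P_1$ decides whether $\check m\in\dot x$. Then the restriction of $p$ to the coordinates $(\xi,i,n)$ with $\xi\in A$ decides the same truth value.
   Context: $\rho:\omega_1\setminus\{0\}\to\omega_1$ is the generic regressive map added by finite partial regressive functions; $\operatorname{Succ}_\rho(\xi)=\{\eta:\rho(\eta)=\xi\}$; a set is $\rho$-closed if closed under $\rho$, and $\operatorname{cl}_\rho(A)$ is the least $\rho$-closed superset. $\mathbb P_1=\operatorname{Fn}(\omega_1\times\omega\times\omega,2,{<}\omega)$, finite partial functions ordered by extension. For $\xi<\omega_1,i<\omega$, $s\subseteq\omega$ finite or cofinite, $\tau^{\mathrm{1cas}}_{\xi,i,s}$ flips the value of a condition at each coordinate $(\zeta,i,n)$ with $n\in s$ and $\zeta\in\{\xi\}\cup\operatorname{Succ}_\rho(\xi)$; $\mathscr G^{\mathrm{1cas}}_\rho$ is the group they generate; $\operatorname{Fix}^{\mathrm{1cas}}_\rho(A)$ is the subgroup acting trivially on coordinates $(\zeta,j,n)$ with $\zeta\in\operatorname{cl}_\rho(A)$; $\mathscr F^{\mathrm{1cas}}_\rho$ is the filter of subgroups generated by these for countable $A$; hereditarily symmetric names are with respect to $(\mathbb P_1,\mathscr G^{\mathrm{1cas}}_\rho,\mathscr F^{\mathrm{1cas}}_\rho)$; a name is supported by $A$ if it is fixed by every element of $\operatorname{Fix}^{\mathrm{1cas}}_\rho(A)$. *)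

(* Defs.v *)
From Stdlib Require Import List Arith ClassicalEpsilon.
Import ListNotations.
Set Implicit Arguments.

Definition countable {W : Type} (A : W -> Prop) : Prop :=
  exists f : nat -> W, forall w, A w -> exists n, f n = w.

(* (W, lt) is (order-isomorphic to) omega_1: a strict well-order all of whose
   proper initial segments are countable, while W itself is uncountable. *)
Definition is_omega1 {W : Type} (lt : W -> W -> Prop) : Prop :=
  (forall x, ~ lt x x) /\
  (forall x y w, lt x y -> lt y w -> lt x w) /\
  (forall x y, lt x y \/ x = y \/ lt y x) /\
  well_founded lt /\
  (forall w, countable (fun v => lt v w)) /\
  ~ countable (fun _ : W => True).

(* rho : omega_1 \ {0} -> omega_1 regressive; z is 0 (value rho z irrelevant) *)
Definition regressive {W : Type} (lt : W -> W -> Prop) (z : W) (rho : W -> W) :=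
  forall eta, eta <> z -> lt (rho eta) eta.

Definition rho_closed {W : Type} (z : W) (rho : W -> W) (B : W -> Prop) :=
  forall eta, B eta -> eta <> z -> B (rho eta).

Definition in_cl {W : Type} (z : W) (rho : W -> W) (A : W -> Prop) (x : W) :=
  forall B : W -> Prop, (forall w, A w -> B w) -> rho_closed z rho B -> B x.

Definition coord (W : Type) := (W * nat * nat)%type.

Definition finsupp {W : Type} (p : coord W -> option bool) : Prop :=
  exists l : list (coord W), forall c, p c <> None -> In c l.

Definition cond (W : Type) := { p : coord W -> option bool | finsupp p }.

Definition cle {W : Type} (q p : cond W) : Prop :=
  forall c b, proj1_sig p c = Some b -> proj1_sig q c = Some b.

Lemma finsupp_none {W : Type} : finsupp (fun _ : coord W => None).
Proof. exists nil; intros c H; now elim H. Qed.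

Definition cone (W : Type) : cond W := exist _ (fun _ => None) finsupp_none.

Definition dense_below {W : Type} (p : cond W) (D : cond W -> Prop) : Prop :=
  forall r, cle r p -> exists q, cle q r /\ D q.

Inductive name (C : Type) : Type :=
  Nm : forall (Ix : Type), (Ix -> name C) -> (Ix -> C) -> name C.
Arguments Nm {C} Ix _ _.

Fixpoint name_eq {C : Type} (x y : name C) : Prop :=
  match x, y with
  | Nm Ix f c, Nm J g d =>
      (forall i, exists j, name_eq (f i) (g j) /\ c i = d j) /\
      (forall j, exists i, name_eq (f i) (g j) /\ c i = d j)
  end.

(* check names of natural numbers (von Neumann): 0 = {}, k+1 = k u {k} *)
Fixpoint checkn {C : Type} (one : C) (n : nat) : name C :=
  match n with
  | O => Nm False (fun e => match e with end) (fun e => match e with end)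
  | S k =>
      match checkn one k with
      | Nm Ix f c =>
          Nm (option Ix)
             (fun o => match o with None => checkn one k | Some i => f i end)
             (fun _ => one)
      end
  end.

(* Kunen's forcing relation for atomic formulas *)
Fixpoint forces_eq {W : Type} (x y : name (cond W)) (p : cond W) : Prop :=
  match x, y with
  | Nm Ix f c, Nm J g d =>
      (forall i, dense_below p (fun q => cle q p /\
          (cle q (c i) -> exists j, cle q (d j) /\ forces_eq (f i) (g j) q))) /\
      (forall j, dense_below p (fun q => cle q p /\
          (cle q (d j) -> exists i, cle q (c i) /\ forces_eq (f i) (g j) q)))
  end.

Definition forces_in {W : Type} (x y : name (cond W)) (p : cond W) : Prop :=
  match y with
  | Nm J g d => dense_below p (fun q => cle q p /\
                   exists j, cle q (d j) /\ forces_eq (g j) x q)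
  end.

Definition forces_nin {W : Type} (x y : name (cond W)) (p : cond W) : Prop :=
  forall q, cle q p -> ~ forces_in x y q.

Definition fin_or_cofin (s : nat -> bool) : Prop :=
  (exists N, forall n, N <= n -> s n = false) \/
  (exists N, forall n, N <= n -> s n = true).

Definition gen (W : Type) := (W * nat * (nat -> bool))%type.

Definition dec (P : Prop) : bool :=
  if excluded_middle_informative P then true else false.

(* does tau_{xi,i,s} flip coordinate (zeta,j,n)?  zeta in {xi} u Succ_rho(xi) *)
Definition gen_hits {W : Type} (z : W) (rho : W -> W) (g : gen W) (c : coord W)
  : bool :=
  match g, c with
  | (xi, i, s), (zeta, j, n) =>
      Nat.eqb i j && s n && dec (zeta = xi \/ (zeta <> z /\ rho zeta = xi))
  end.

(* elements of the generated group: finite words of generators *)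
Definition valid_word {W : Type} (pi : list (gen W)) : Prop :=
  Forall (fun g => fin_or_cofin (snd g)) pi.

Definition flip_at {W : Type} (z : W) (rho : W -> W) (pi : list (gen W))
  (c : coord W) : bool :=
  fold_right xorb false (map (fun g => gen_hits z rho g c) pi).

Definition act_fun {W : Type} (z : W) (rho : W -> W) (pi : list (gen W))
  (p : cond W) : coord W -> option bool :=
  fun c => option_map (xorb (flip_at z rho pi c)) (proj1_sig p c).

Lemma act_finsupp {W : Type} (z : W) rho pi (p : cond W) :
  finsupp (act_fun z rho pi p).
Proof.
  destruct p as [p [l Hl]]; exists l; intros c Hc; apply Hl.
  unfold act_fun in Hc; simpl in Hc; destruct (p c); [discriminate|easy].
Qed.

Definition act_cond {W : Type} (z : W) rho pi (p : cond W) : cond W :=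
  exist _ (act_fun z rho pi p) (act_finsupp z rho pi p).

Fixpoint act_name {W : Type} (z : W) rho pi (x : name (cond W)) : name (cond W) :=
  match x with
  | Nm Ix f c => Nm Ix (fun i => act_name z rho pi (f i)) (fun i => act_cond z rho pi (c i))
  end.

Definition inFix {W : Type} (z : W) rho (A : W -> Prop) (pi : list (gen W)) : Prop :=
  forall zeta j n, in_cl z rho A zeta -> flip_at z rho pi (zeta, j, n) = false.

Definition supported {W : Type} (z : W) rho (A : W -> Prop) (x : name (cond W)) :=
  forall pi, valid_word pi -> inFix z rho A pi -> name_eq (act_name z rho pi x) x.

(* symmetric: sym(x) belongs to the filter generated by the Fix(B), B countable *)
Definition symmetric {W : Type} (z : W) rho (x : name (cond W)) : Prop :=
  exists B : W -> Prop, countable B /\ supported z rho B x.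

Fixpoint hsym {W : Type} (z : W) rho (x : name (cond W)) : Prop :=
  symmetric z rho x /\
  match x with Nm Ix f _ => forall i, hsym z rho (f i) end.

Definition restr_fun {W : Type} (A : W -> Prop) (p : cond W) : coord W -> option bool :=
  fun c => match c with (xi, _, _) => if dec (A xi) then proj1_sig p c else None end.

Lemma restr_finsupp {W : Type} (A : W -> Prop) (p : cond W) : finsupp (restr_fun A p).
Proof.
  destruct p as [p [l Hl]]; exists l; intros [[xi i] n] Hc; apply Hl.
  unfold restr_fun in Hc; simpl in Hc; destruct (dec (A xi)); [easy|now elim Hc].
Qed.

Definition restrict {W : Type} (A : W -> Prop) (p : cond W) : cond W :=
  exist _ (restr_fun A p) (restr_finsupp A p).

(* Main.v *)
Require Import Defs.
From Stdlib Require Import List Arith Lia Bool ClassicalEpsilon FunctionalExtensionality ProofIrrelevance.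
Import ListNotations.

Lemma cond_ext {W : Type} (p q : cond W) :
  (forall c, proj1_sig p c = proj1_sig q c) -> p = q.
Proof.
  destruct p as [p Hp], q as [q Hq]; simpl; intro H.
  assert (p = q) by (apply functional_extensionality; auto). subst.
  f_equal; apply proof_irrelevance.
Qed.

Lemma cle_trans {W : Type} (a b c : cond W) : cle a b -> cle b c -> cle a c.
Proof. unfold cle; auto. Qed.

Lemma cle_refl {W : Type} (a : cond W) : cle a a.
Proof. unfold cle; auto. Qed.

Lemma act_act {W : Type} (z : W) rho pi (p : cond W) :
  act_cond z rho pi (act_cond z rho pi p) = p.
Proof.
  apply cond_ext; intro c; unfold act_cond, act_fun; simpl.
  destruct (proj1_sig p c) as [b|]; simpl; auto.
  destruct (flip_at z rho pi c), b; reflexivity.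
Qed.

Lemma act_cle {W : Type} (z : W) rho pi (p q : cond W) :
  cle q p -> cle (act_cond z rho pi q) (act_cond z rho pi p).
Proof.
  unfold cle; simpl; unfold act_fun; intros H c b.
  destruct (proj1_sig p c) as [b'|] eqn:E; simpl; [|discriminate].
  rewrite (H _ _ E); auto.
Qed.

Lemma act_cle_inv {W : Type} (z : W) rho pi (p q : cond W) :
  cle (act_cond z rho pi q) (act_cond z rho pi p) -> cle q p.
Proof.
  intro H; apply (act_cle z rho pi) in H; rewrite !act_act in H; exact H.
Qed.

Lemma act_cone {W : Type} (z : W) rho pi :
  act_cond z rho pi (cone W) = cone W.
Proof. apply cond_ext; intro c; reflexivity. Qed.

Lemma dense_act {W : Type} (z : W) rho pi (p : cond W) (D D' : cond W -> Prop) :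
  dense_below p D -> (forall q, D q -> D' (act_cond z rho pi q)) ->
  dense_below (act_cond z rho pi p) D'.
Proof.
  intros H HD r Hr.
  pose proof (act_cle z rho pi _ _ Hr) as H'; rewrite act_act in H'.
  destruct (H _ H') as [q [Hq Dq]].
  exists (act_cond z rho pi q); split; auto.
  pose proof (act_cle z rho pi _ _ Hq) as H2; rewrite act_act in H2; exact H2.
Qed.

Lemma forces_eq_act {W : Type} (z : W) rho pi :
  forall (x y : name (cond W)) p, forces_eq x y p ->
  forces_eq (act_name z rho pi x) (act_name z rho pi y) (act_cond z rho pi p).
Proof.
  intro x; induction x as [Ix f IH c]; intros [J g d] p [H1 H2]; simpl; split.
  - intro i. eapply dense_act; [apply (H1 i)|].
    intros q [Hqp Hq]; split; [apply act_cle; auto|].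
    intro Hc; apply act_cle_inv in Hc.
    destruct (Hq Hc) as [j [Hj Hf]].
    exists j; split; [apply act_cle; auto | apply IH; auto].
  - intro j. eapply dense_act; [apply (H2 j)|].
    intros q [Hqp Hq]; split; [apply act_cle; auto|].
    intro Hc; apply act_cle_inv in Hc.
    destruct (Hq Hc) as [i [Hi Hf]].
    exists i; split; [apply act_cle; auto | apply IH; auto].
Qed.

Lemma forces_eq_neq {W : Type} :
  forall (x x' y y' : name (cond W)) p, name_eq x x' -> name_eq y y' ->
  forces_eq x y p -> forces_eq x' y' p.
Proof.
  intro x; induction x as [Ix f IH c];
  intros [Ix' f' c'] [J g d] [J' g' d'] p [Ex1 Ex2] [Ey1 Ey2] [H1 H2]; simpl; split.
  - intro i'. destruct (Ex2 i') as [i [Ei Eci]]. intros r Hr.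
    destruct (H1 i r Hr) as [q [Hqr [Hqp Hq]]].
    exists q; split; [auto|split; [auto|]].
    intro Hc. rewrite <- Eci in Hc. destruct (Hq Hc) as [j [Hj Hf]].
    destruct (Ey1 j) as [j' [Ej Edj]].
    exists j'; split; [rewrite <- Edj; auto | eapply IH; eauto].
  - intro j'. destruct (Ey2 j') as [j [Ej Edj]]. intros r Hr.
    destruct (H2 j r Hr) as [q [Hqr [Hqp Hq]]].
    exists q; split; [auto|split; [auto|]].
    intro Hc. rewrite <- Edj in Hc. destruct (Hq Hc) as [i [Hi Hf]].
    destruct (Ex1 i) as [i' [Ei Eci]].
    exists i'; split; [rewrite <- Eci; auto | eapply IH; eauto].
Qed.

Lemma act_checkn {W : Type} (z : W) rho pi :
  forall m, name_eq (act_name z rho pi (checkn (cone W) m)) (checkn (cone W) m).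
Proof.
  induction m as [|m IHm].
  - simpl; split; intros [].
  - revert IHm; cbn [checkn]; destruct (checkn (cone W) m) as [Ix f c]; intro IH.
    pose proof IH as IH'. simpl in IH'. destruct IH' as [IH1 IH2].
    simpl; split.
    + intros [i|].
      * destruct (IH1 i) as [j [Ej _]]; exists (Some j); split; [exact Ej | apply act_cone].
      * exists None; split; [exact IH | apply act_cone].
    + intros [j|].
      * destruct (IH2 j) as [i [Ei _]]; exists (Some i); split; [exact Ei | apply act_cone].
      * exists None; split; [exact IH | apply act_cone].
Qed.

Lemma forces_in_act {W : Type} (z : W) rho pi (a y : name (cond W)) r :
  forces_in a y r ->
  forces_in (act_name z rho pi a) (act_name z rho pi y) (act_cond z rho pi r).
Proof.
  destruct y as [J g d]; simpl; intro H; eapply dense_act; [exact H|].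
  intros q [Hq [j [Hj Hf]]]; split; [apply act_cle; auto|].
  exists j; split; [apply act_cle; auto | apply forces_eq_act; auto].
Qed.

Lemma forces_in_neq {W : Type} (a a' y y' : name (cond W)) p :
  name_eq a a' -> name_eq y y' -> forces_in a y p -> forces_in a' y' p.
Proof.
  destruct y as [J g d], y' as [J' g' d']; simpl; intros Ea [Ey1 Ey2] H r Hr.
  destruct (H r Hr) as [q [Hqr [Hqp [j [Hj Hf]]]]].
  destruct (Ey1 j) as [j' [Ej Edj]].
  exists q; split; auto; split; auto; exists j'; split;
    [rewrite <- Edj; auto | eapply forces_eq_neq; eauto].
Qed.

Lemma forces_in_mono {W : Type} (a y : name (cond W)) p s :
  forces_in a y p -> cle s p -> forces_in a y s.
Proof.
  destruct y as [J g d]; simpl; intros H Hs r Hr.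
  destruct (H r (cle_trans _ _ _ Hr Hs)) as [q [Hqr [Hqp Hj]]].
  exists q; split; [exact Hqr|]; split; [eapply cle_trans; [exact Hqr|exact Hr] | exact Hj].
Qed.

Lemma forces_in_dense {W : Type} (a y : name (cond W)) p :
  (forall r, cle r p -> exists q, cle q r /\ forces_in a y q) -> forces_in a y p.
Proof.
  destruct y as [J g d]; simpl; intros H r Hr.
  destruct (H r Hr) as [q [Hqr Hq]].
  destruct (Hq q (cle_refl q)) as [q' [Hq'q [_ Hj]]].
  exists q'; split; [eapply cle_trans; eauto|].
  split; [eapply cle_trans; [eapply cle_trans; eauto | exact Hr] | exact Hj].
Qed.

Lemma dec_true (P : Prop) : dec P = true <-> P.
Proof.
  unfold dec; destruct (excluded_middle_informative P); split; intros; auto;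
  try discriminate; contradiction.
Qed.

Lemma exists_max {W : Type} (lt : W -> W -> Prop)
  (Hirr : forall x, ~ lt x x) (Htr : forall x y w, lt x y -> lt y w -> lt x w)
  (Htot : forall x y, lt x y \/ x = y \/ lt y x) (key : coord W -> W) :
  forall L : list (coord W), L <> [] ->
  exists c, In c L /\ forall c', In c' L -> ~ lt (key c) (key c').
Proof.
  induction L as [|a l IH]; [congruence|]. intros _.
  destruct l as [|b l'].
  - exists a; split; [left; auto|]. intros c' [<-|[]]; apply Hirr.
  - destruct IH as [m [Hm Hmax]]; [congruence|].
    destruct (Htot (key a) (key m)) as [H|[H|H]].
    + exists m; split; [right; auto|]. intros c' [<-|Hc'].
      * intro H'. apply (Hirr (key a)); eauto.
      * auto.
    + exists a; split; [left; auto|]. intros c' [<-|Hc']; [apply Hirr|].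
      rewrite H; auto.
    + exists a; split; [left; auto|]. intros c' [<-|Hc']; [apply Hirr|].
      intro H'. apply (Hmax c' Hc'); eauto.
Qed.

Definition keyc {W : Type} (c : coord W) : W := fst (fst c).

Definition ceq_dec {W : Type} : forall a b : coord W, {a = b} + {a <> b} :=
  fun a b => excluded_middle_informative (a = b).

Lemma solve {W : Type} (lt : W -> W -> Prop) (z : W) (rho : W -> W)
  (Hirr : forall x, ~ lt x x) (Htr : forall x y w, lt x y -> lt y w -> lt x w)
  (Htot : forall x y, lt x y \/ x = y \/ lt y x)
  (Hrho : regressive lt z rho)
  (A : W -> Prop) (HAcl : rho_closed z rho A) (t : coord W -> bool) :
  forall n (L : list (coord W)), length L <= n ->
  (forall c, In c L -> t c = true -> ~ A (keyc c)) ->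
  exists pi, valid_word pi /\ inFix z rho A pi /\
    forall c, In c L -> flip_at z rho pi c = t c.
Proof.
  assert (Hnil : exists pi, valid_word pi /\ inFix z rho A pi /\
            forall c, In c (@nil (coord W)) -> flip_at z rho pi c = t c).
  { exists nil; split; [constructor|split]; [intros ? ? ? ?; reflexivity| intros c []]. }
  induction n as [|n IHn]; intros L HL Ht.
  - destruct L; [exact Hnil | simpl in HL; lia].
  - destruct L as [|c0 L0]; [exact Hnil|].
    set (L := c0 :: L0) in *.
    destruct (exists_max lt Hirr Htr Htot keyc L) as [cs [Hcs Hmax]]; [unfold L; congruence|].
    set (L' := remove ceq_dec cs L).
    assert (HL' : length L' <= n).
    { pose proof (remove_length_lt ceq_dec L cs Hcs). fold L' in H. lia. }
    destruct (IHn L' HL') as [pi' [Hv [Hf Hpi]]].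
    { intros c Hc; apply in_remove in Hc; destruct Hc; auto. }
    assert (HinL' : forall c, In c L -> c <> cs -> In c L').
    { intros c Hc Hne; apply in_in_remove; auto. }
    destruct (bool_dec (flip_at z rho pi' cs) (t cs)) as [Heq|Hne].
    + exists pi'; split; [auto|split; [auto|]].
      intros c Hc. destruct (ceq_dec c cs) as [->|Hn]; auto.
    + destruct cs as [[zs is] ns] eqn:Ecs.
      assert (HnA : ~ A zs).
      { intro HA. apply Hne. rewrite Hf.
        - destruct (t (zs, is, ns)) eqn:Et; auto.
          exfalso; exact (Ht _ Hcs Et HA).
        - intros B HB _; apply HB; exact HA. }
      set (g := (zs, is, fun k => Nat.eqb k ns) : gen W).
      exists (g :: pi'); split; [|split].
      * constructor; auto. left; exists (S ns); intros k Hk; apply Nat.eqb_neq; simpl; lia.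
      * intros zeta j n0 Hcl.
        change (xorb (gen_hits z rho g (zeta, j, n0)) (flip_at z rho pi' (zeta, j, n0)) = false).
        rewrite Hf by exact Hcl.
        assert (HA : A zeta) by (apply Hcl; auto).
        unfold gen_hits, g.
        destruct (dec (zeta = zs \/ zeta <> z /\ rho zeta = zs)) eqn:E.
        -- apply (proj1 (dec_true _)) in E. exfalso. destruct E as [->|[Hz Hr]]; auto.
           apply HnA; rewrite <- Hr; apply HAcl; auto.
        -- rewrite andb_false_r; reflexivity.
      * intros c Hc.
        change (xorb (gen_hits z rho g c) (flip_at z rho pi' c) = t c).
        destruct (ceq_dec c (zs, is, ns)) as [->|Hn].
        -- unfold gen_hits, g. rewrite Nat.eqb_refl, Nat.eqb_refl.
           assert (dec (zs = zs \/ zs <> z /\ rho zs = zs) = true) as -> by (apply dec_true; auto).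
           simpl. destruct (flip_at z rho pi' (zs, is, ns)), (t (zs, is, ns)); simpl; congruence.
        --  rewrite (Hpi c (HinL' c Hc Hn)).
           destruct c as [[zeta j] n0].
           unfold gen_hits, g.
           destruct (Nat.eqb is j && Nat.eqb n0 ns && dec (zeta = zs \/ zeta <> z /\ rho zeta = zs)) eqn:E;
             [|reflexivity].
           exfalso.
           apply andb_true_iff in E; destruct E as [E E3].
           apply andb_true_iff in E; destruct E as [E1 E2].
           apply Nat.eqb_eq in E1, E2. apply (proj1 (dec_true _)) in E3. subst.
           destruct E3 as [->|[Hz Hr]]; [apply Hn; auto|].
           apply (Hmax _ Hc). unfold keyc; simpl. rewrite <- Hr. apply Hrho; auto.
Qed.

Lemma key_lemma {W : Type} (lt : W -> W -> Prop) (z : W) (rho : W -> W)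
  (Hirr : forall x, ~ lt x x) (Htr : forall x y w, lt x y -> lt y w -> lt x w)
  (Htot : forall x y, lt x y \/ x = y \/ lt y x)
  (Hrho : regressive lt z rho)
  (A : W -> Prop) (HAcl : rho_closed z rho A) (p r : cond W) :
  cle r (restrict A p) ->
  exists pi, valid_word pi /\ inFix z rho A pi /\
    exists s, cle s p /\ cle s (act_cond z rho pi r).
Proof.
  intro Hr.
  set (t := fun c => match proj1_sig r c, proj1_sig p c with
                     | Some b0, Some b' => xorb b0 b' | _, _ => false end).
  destruct (proj2_sig r) as [lr Hlr].
  destruct (solve lt z rho Hirr Htr Htot Hrho A HAcl t (length lr) lr (le_n _)) as [pi [Hv [Hf Hpi]]].
  { intros [[zeta i] n] _ Ht HA. unfold t in Ht.
    destruct (proj1_sig r (zeta, i, n)) as [b0|] eqn:E1; [|discriminate].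
    destruct (proj1_sig p (zeta, i, n)) as [b'|] eqn:E2; [|discriminate].
    assert (proj1_sig (restrict A p) (zeta, i, n) = Some b') as E3.
    { simpl; unfold restr_fun. assert (dec (A zeta) = true) as -> by (apply dec_true; auto). auto. }
    apply Hr in E3. rewrite E3 in E1. injection E1 as ->. destruct b0; discriminate. }
  exists pi; split; [auto|split; [auto|]].
  set (Pr := act_cond z rho pi r).
  assert (Hcomp : forall c b b', proj1_sig Pr c = Some b -> proj1_sig p c = Some b' -> b = b').
  { intros c b b' H1 H2. simpl in H1; unfold act_fun in H1.
    destruct (proj1_sig r c) as [b0|] eqn:E; [|discriminate]. simpl in H1.
    injection H1 as <-. rewrite Hpi by (apply Hlr; congruence).
    unfold t; rewrite E, H2. destruct b0, b'; reflexivity. }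
  set (sf := fun c => match proj1_sig p c with Some b => Some b | None => proj1_sig Pr c end).
  assert (Hsf : finsupp sf).
  { destruct (proj2_sig p) as [lp Hlp]. destruct (proj2_sig Pr) as [lq Hlq].
    exists (lp ++ lq). intros c Hc. apply in_or_app. unfold sf in Hc.
    destruct (proj1_sig p c) eqn:E; [left; apply Hlp; congruence | right; apply Hlq; auto]. }
  exists (exist _ sf Hsf); split.
  - intros c b H; simpl; unfold sf; rewrite H; auto.
  - intros c b H; simpl; unfold sf.
    destruct (proj1_sig p c) as [b'|] eqn:E; auto.
    rewrite (Hcomp _ _ _ H E); auto.
Qed.

Theorem lemma4p4 (W : Type) (lt : W -> W -> Prop) (z : W) (rho : W -> W)
  (HW : is_omega1 lt) (Hz : forall w, w = z \/ lt z w)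
  (Hrho : regressive lt z rho)
  (x : name (cond W)) (Hx : hsym z rho x)
  (A : W -> Prop) (HAc : countable A) (HAcl : rho_closed z rho A)
  (Hsupp : supported z rho A x)
  (m : nat) (p : cond W)
  (Hdec : forces_in (checkn (cone W) m) x p \/ forces_nin (checkn (cone W) m) x p) :
  (forces_in (checkn (cone W) m) x p ->
     forces_in (checkn (cone W) m) x (restrict A p)) /\
  (forces_nin (checkn (cone W) m) x p ->
     forces_nin (checkn (cone W) m) x (restrict A p)).
Proof.
  destruct HW as [Hirr [Htr [Htot _]]].
  assert (Hinv : forall pi q, valid_word pi -> inFix z rho A pi ->
            forces_in (checkn (cone W) m) x q ->
            forces_in (checkn (cone W) m) x (act_cond z rho pi q)).
  { intros pi q Hv Hf H. eapply forces_in_neq;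
      [apply act_checkn | apply Hsupp; eauto | apply forces_in_act; exact H]. }
  split.
  - intros Hin. apply forces_in_dense. intros r Hr.
    destruct (key_lemma lt z rho Hirr Htr Htot Hrho A HAcl p r Hr) as [pi [Hv [Hf [s [Hsp Hsr]]]]].
    pose proof (forces_in_mono _ _ _ _ Hin Hsp) as Hs.
    apply (Hinv pi) in Hs; auto.
    pose proof (act_cle z rho pi _ _ Hsr) as Hsr'. rewrite act_act in Hsr'.
    exists (act_cond z rho pi s); split; auto.
  - intros Hnin r Hr Hinr.
    destruct (key_lemma lt z rho Hirr Htr Htot Hrho A HAcl p r Hr) as [pi [Hv [Hf [s [Hsp Hsr]]]]].
    apply (Hinv pi) in Hinr; auto.
    apply (Hnin s Hsp). eapply forces_in_mono; eauto.
Qed.
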